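(* Suppose a first-order method in Algorithm Class 2 is applied to the splitting reformulation (SP) of instance $\mathcal P$ from $x^{(0)}=0$, $y^{(0)}=0$, and generates $\{(x^{(t)},y^{(t)})\}_{t\ge1}$, with $x^{(t)}=(x_1^{(t)\top},\dots,x_m^{(t)\top})^\top$, $x_i^{(t)}\in\mathbb R^{\bar d}$, and $y^{(t)}=(y_1^{(t)\top},\dots,y_{3m_2-1}^{(t)\top})^\top$, $y_j^{(t)}\in\mathbb R^{\bar d}$. Then for any $\bar j\in\{2,3,\dots,\bar d\}$, $\mathrm{supp}(x_i^{(t)})\subset\{1,\dots,\bar j-1\}$ and $\mathrm{supp}(y_j^{(t)})\subset\{1,\dots,\bar j-1\}$ for all $i=1,\dots,m$, $j=1,\dots,3m_2-1$, and all $t\le 1+m(\bar j-2)/3$.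
   Context: $\mathrm{supp}(z)=\{j:[z]_j\ne0\}$. Splitting reformulation (SP) of $\min f_0(x)+\bar g(\bar Ax+\bar b)$ s.t. $Ax+b=0$: $\min_{x,y}f_0(x)+\bar g(y)$ s.t. $Ax+b=0$, $y=\bar Ax+\bar b$. Algorithm Class 2: given $(x^{(0)},y^{(0)})$, for all $t\ge1$, $x^{(t)}\in\mathrm{span}\{x^{(s)},\nabla f_0(x^{(s)}),A^\top b,A^\top Ax^{(s)},\bar A^\top\bar b,\bar A^\top\bar Ax^{(s)},\bar A^\top y^{(s)}\}_{s=0}^{t-1}$ and $y^{(t)}\in\mathrm{span}\{\xi^{(t)},\mathrm{prox}_{\eta_t\bar g}(\xi^{(t)})\}$ with $\eta_t>0$, $\xi^{(t)}\in\mathrm{span}\{\bar b,y^{(s)},\bar A\bar A^\top y^{(s)},\bar Ax^{(s)}\}_{s=0}^{t-1}$, where $\mathrm{prox}_{\eta\bar g}(y)=\arg\min_{y'}\{\bar g(y')+\frac1{2\eta}\|y'-y\|^2\}$. Instance $\mathcal P$: fix $\epsilon\in(0,1)$, $L_f>0$, integers $m_1\ge2$, $m_2\ge1$ with $m_1m_2$ even, $m=3m_1m_2$, an odd integer $\bar d\ge5$, $d=m\bar d$. Write $x=(x_1^\top,\dots,x_m^\top)^\top$, $x_i\in\mathbb R^{\bar d}$; $[z]_j$ is the $j$-th coordinate. $J_p\in\mathbb R^{(p-1)\times p}$ has $-1$ at $(k,k)$, $1$ at $(k,k+1)$, zero elsewhere. $\mathcal M=\{im_1:i=1,\dots,3m_2-1\}$,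 $\mathcal M^C=\{1,\dots,m-1\}\setminus\mathcal M$, $\bar n=(3m_2-1)\bar d$, $\bar A=mL_f(J_{\mathcal M}\otimes I_{\bar d})$, $A=mL_f(J_{\mathcal M^C}\otimes I_{\bar d})$ with $J_{\mathcal M},J_{\mathcal M^C}$ the rows of $J_m$ indexed by $\mathcal M,\mathcal M^C$; $b=0$, $\bar b=0$. Choose $\beta>(50\pi+1+\|A\|)\sqrt m\,\epsilon$; $\bar g(y)=\frac{\beta}{mL_f}\|y\|_1$ on $\mathbb R^{\bar n}$. $\Psi(u)=0$ ($u\le0$), $1-e^{-u^2}$ ($u>0$); $\Phi(v)=4\arctan v+2\pi$. For $z\in\mathbb R^{\bar d}$: $\varphi(z,1)=-\Psi(1)\Phi([z]_1)$, $\varphi(z,j)=\Psi(-[z]_{j-1})\Phi(-[z]_j)-\Psi([z]_{j-1})\Phi([z]_j)$ ($2\le j\le\bar d$); $h_i(z)=\varphi(z,1)+3\sum_{j=1}^{\lfloor\bar d/2\rfloor}\varphi(z,2j)$ for $1\le i\le m/3$, $h_i(z)=\varphi(z,1)$ for $m/3+1\le i\le 2m/3$, $h_i(z)=\varphi(z,1)+3\sum_{j=1}^{\lfloor\bar d/2\rfloor}\varphi(z,2j+1)$ for $2m/3+1\le i\le m$. $f_i(z)=\frac{300\pi\epsilon^2}{mL_f}h_i(\frac{\sqrt mL_fz}{150\pi\epsilon})$, $f_0(x)=\sum_{i=1}^mf_i(x_i)$. Instance $\mathcal P$ is $\min_xf_0(x)+\bar g(\bar Ax)$ s.t. $Ax+b=0$.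 *)

(* Defs.v *)
From mathcomp Require Import all_boot all_algebra.
From mathcomp Require Import all_classical all_reals all_analysis.
From mathcomp.real_closed Require Export mxtens.
Import numFieldNormedType.Exports.


Unset Strict Implicit.
Unset Printing Implicit Defensive.

Import GRing.Theory Num.Theory.
Local Open Scope ring_scope.

Section Defs.
Variable R : realType.

Definition sqnorm {n} (v : 'cV[R]_n) : R := \sum_(i < n) (v i 0) ^+ 2.
Definition l2norm {n} (v : 'cV[R]_n) : R := Num.sqrt (sqnorm v).
Definition l1norm {n} (v : 'cV[R]_n) : R := \sum_(i < n) `|v i 0|.
Definition opnorm {p q} (A : 'M[R]_(p, q)) : R :=
  sup [set l2norm (A *m v) | v in [set v : 'cV[R]_q | l2norm v <= 1]].

Definition grad {n} (f : 'cV[R]_n -> R) (x : 'cV[R]_n) : 'cV[R]_n :=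
  \col_(j < n) ('D_(delta_mx j 0) f x : R).

Definition is_prox {n} (g : 'cV[R]_n -> R) (eta : R) (xi p : 'cV[R]_n) : Prop :=
  forall y' : 'cV[R]_n,
    g p + (2 * eta)^-1 * sqnorm (p - xi) <= g y' + (2 * eta)^-1 * sqnorm (y' - xi).

(** Algorithm Class 2 applied to (SP):
    min f0 x + g y  s.t.  A x + b = 0,  y = Ab x + bb. *)
Definition class2 {d nb pa : nat} (f0 : 'cV[R]_d -> R) (g : 'cV[R]_nb -> R)
  (A : 'M[R]_(pa, d)) (b : 'cV[R]_pa) (Ab : 'M[R]_(nb, d)) (bb : 'cV[R]_nb)
  (x : nat -> 'cV[R]_d) (y : nat -> 'cV[R]_nb) : Prop :=
  forall t : nat, (1 <= t)%N ->
    x t \in << flatten [seq [:: x s; grad f0 (x s); A^T *m b; A^T *m A *m x s;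
                              Ab^T *m bb; Ab^T *m Ab *m x s; Ab^T *m y s]
                       | s <- iota 0 t] >>%VS
    /\ exists eta : R, 0 < eta /\
       exists xi : 'cV[R]_nb,
         xi \in << flatten [seq [:: bb; y s; Ab *m Ab^T *m y s; Ab *m x s]
                           | s <- iota 0 t] >>%VS
         /\ exists p : 'cV[R]_nb, is_prox g eta xi p /\ y t \in << [:: xi; p] >>%VS.

Definition mdim (m1 m2 : nat) : nat := (3 * m1 * m2)%N.

Definition Jmat (p : nat) : 'M[R]_(p.-1, p) :=
  \matrix_(k < p.-1, c < p)
    (if (c == k :> nat) then -1 else if (c == k.+1 :> nat) then 1 else 0).

(** Rows of J_p indexed by S (a subset of {1,...,p-1}, stored 0-based),
    in increasing order. *)
Definition Jrows (p : nat) (S : {set 'I_p.-1}) : 'M[R]_(#|S|, p) :=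
  \matrix_(r < #|S|, c < p) Jmat p (enum_val r) c.

(** M = {i m1 : i = 1..3 m2 - 1} as a subset of {1,...,m-1}
    (element k : 'I_(m-1) stands for the index k+1). *)
Definition Mset (m1 m2 : nat) : {set 'I_(mdim m1 m2).-1} :=
  [set k : 'I_(mdim m1 m2).-1 | (m1 %| k.+1)%N].

Definition Abar (Lf : R) (m1 m2 dbar : nat) :
  'M[R]_(#|Mset m1 m2| * dbar, mdim m1 m2 * dbar) :=
  ((mdim m1 m2)%:R * Lf) *: (Jrows (mdim m1 m2) (Mset m1 m2) *t (1%:M : 'M[R]_dbar)).
Definition Amat (Lf : R) (m1 m2 dbar : nat) :
  'M[R]_(#|~: Mset m1 m2| * dbar, mdim m1 m2 * dbar) :=
  ((mdim m1 m2)%:R * Lf) *: (Jrows (mdim m1 m2) (~: Mset m1 m2) *t (1%:M : 'M[R]_dbar)).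

Definition gbar (beta Lf : R) (m1 m2 dbar : nat)
  (y : 'cV[R]_(#|Mset m1 m2| * dbar)) : R :=
  beta / ((mdim m1 m2)%:R * Lf) * l1norm y.

Definition Psi (u : R) : R := if u <= 0 then 0 else 1 - expR (- (u ^+ 2)).
Definition Phi (v : R) : R := 4 * atan v + 2 * pi.

(** 1-based coordinate [z]_j of z in R^n *)
Definition zc {n} (z : 'I_n -> R) (j : nat) : R :=
  if @insub nat (fun k => (k < n)%N) 'I_n j.-1 is Some o then z o else 0.

Definition varphi {n} (z : 'I_n -> R) (j : nat) : R :=
  if j == 1%N then - Psi 1 * Phi (zc z 1)
  else Psi (- zc z j.-1) * Phi (- zc z j) - Psi (zc z j.-1) * Phi (zc z j).

(** h_i, i 1-based in {1,...,m} *)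
Definition hfun (m dbar : nat) (i : nat) (z : 'I_dbar -> R) : R :=
  if (i <= m %/ 3)%N then
    varphi z 1 + 3 * \sum_(1 <= j < (dbar./2).+1) varphi z (2 * j)
  else if (i <= (2 * m) %/ 3)%N then varphi z 1
  else varphi z 1 + 3 * \sum_(1 <= j < (dbar./2).+1) varphi z (2 * j + 1).

Definition ffun (eps Lf : R) (m dbar : nat) (i : nat) (z : 'I_dbar -> R) : R :=
  (300 * pi * eps ^+ 2) / (m%:R * Lf) *
  hfun m dbar i (fun k => (Num.sqrt m%:R * Lf) / (150 * pi * eps) * z k).

(** block x_i (i 0-based) of x = (x_1^T, ..., x_m^T)^T *)
Definition blk {p n} (x : 'cV[R]_(p * n)) (i : 'I_p) : 'I_n -> R :=
  fun k => x (mxtens_index (i, k)) 0.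

Definition f0 (eps Lf : R) (m1 m2 dbar : nat) (x : 'cV[R]_(mdim m1 m2 * dbar)) : R :=
  \sum_(i < mdim m1 m2) ffun eps Lf (mdim m1 m2) dbar i.+1 (blk x i).

End Defs.

Arguments sqnorm {R n}. Arguments l2norm {R n}. Arguments l1norm {R n}.
Arguments opnorm {R p q}. Arguments grad {R n}. Arguments is_prox {R n}.
Arguments class2 {R d nb pa}. Arguments Jmat {R}. Arguments Jrows {R}.
Arguments Abar {R}. Arguments Amat {R}. Arguments gbar {R}.
Arguments Psi {R}. Arguments Phi {R}. Arguments zc {R n}. Arguments varphi {R n}.
Arguments hfun {R}. Arguments ffun {R}. Arguments blk {R p n}. Arguments f0 {R}.

(* Main.v *)
Require Import Defs.
From mathcomp Require Import all_boot all_order all_algebra.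
From mathcomp Require Import all_classical all_reals all_analysis.
From mathcomp.real_closed Require Import mxtens.
From mathcomp Require Import zify ring lra.
Import Order.TTheory GRing.Theory Num.Theory.
Local Open Scope ring_scope.


Section Aux.
Variable R : realType.

Lemma span_entry0 n (X : seq 'cV[R]_n) v u :
  (forall w, w \in X -> w u 0 = 0) -> v \in <<X>>%VS -> v u 0 = 0.
Proof.
move=> H /(coord_span (X:=in_tuple X)) ->.
rewrite summxE big1 // => i _; rewrite mxE (H _) ?mulr0 //.
by apply: mem_nth; case: i.
Qed.

Lemma flatten_entry0 n (F : nat -> seq 'cV[R]_n) t u :
  (forall s, (s < t)%N -> forall w, w \in F s -> w u 0 = 0) ->
  forall w, w \in flatten [seq F s | s <- iota 0 t] -> w u 0 = 0.
Proof.
move=> H w /flatten_mapP [s]; rewrite mem_iota => /andP[_ st] wF.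
exact: (H s st).
Qed.

Lemma tens1_mul0 p q n (M : 'M[R]_(p, q)) (sc : R) (v : 'cV[R]_(q*n)) r k :
  (forall c, M r c != 0 -> v (mxtens_index (c,k)) 0 = 0) ->
  ((sc *: (M *t (1%:M : 'M[R]_n))) *m v) (mxtens_index (r,k)) 0 = 0.
Proof.
move=> H; rewrite -scalemxAl mxE [X in _ * X]mxE big1 ?mulr0 // => j _.
case: (mxtens_indexP j) => c k'; rewrite tensmxE [(1%:M : 'M[R]_n) _ _]mxE.
case: (eqVneq k k') => [<-|nk]; last by rewrite mulr0 mul0r.
rewrite mulr1; case: (eqVneq (M r c) 0) => [->|/H ->]; by rewrite ?mul0r ?mulr0.
Qed.

Lemma tens1_mulT0 p q n (M : 'M[R]_(p, q)) (sc : R) (v : 'cV[R]_(p*n)) c k :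
  (forall r, M r c != 0 -> v (mxtens_index (r,k)) 0 = 0) ->
  (((sc *: (M *t (1%:M : 'M[R]_n)))^T) *m v) (mxtens_index (c,k)) 0 = 0.
Proof.
move=> H; rewrite linearZ /= trmx_tens trmx1; apply: tens1_mul0 => r.
by rewrite mxE; apply: H.
Qed.

Lemma Jrows_nz p (S : {set 'I_p.-1}) r (c : 'I_p) :
  @Jrows R p S r c != 0 -> (c : nat) = enum_val r \/ (c : nat) = (enum_val r).+1.
Proof.
rewrite !mxE; case: ifP => [/eqP -> _|_]; first by left.
case: ifP => [/eqP -> _|_]; first by right.
by rewrite eqxx.
Qed.

Lemma prox_zero n (c eta : R) (xi p : 'cV[R]_n) u :
  0 <= c -> 0 < eta -> is_prox (fun y => c * l1norm y) eta xi p ->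
  xi u 0 = 0 -> p u 0 = 0.
Proof.
move=> c0 eta0 Hp xi0.
pose p' := p - (p u 0) *: delta_mx u 0.
have Ep' l : p' l 0 = if l == u then 0 else p l 0.
  rewrite !mxE eqxx andbT; case: eqP => [->|_]; last by rewrite mulr0 subr0.
  by rewrite mulr1 subrr.
have Hl : l1norm p = `|p u 0| + l1norm p'.
  rewrite /l1norm (bigD1 u) //= [X in _ = _ + X](bigD1 u) //= Ep' eqxx normr0 add0r.
  congr (_ + _); apply: eq_bigr => l /negbTE lu; by rewrite Ep' lu.
have E1 l : (p - xi) l 0 = p l 0 - xi l 0 by rewrite mxE [(- xi) _ _]mxE.
have E2 l : (p' - xi) l 0 = (if l == u then 0 else p l 0) - xi l 0.
  by rewrite [LHS]mxE [(- xi) _ _]mxE Ep'.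
have Hs : sqnorm (p - xi) = (p u 0) ^+ 2 + sqnorm (p' - xi).
  rewrite /sqnorm (bigD1 u) //= [X in _ = _ + X](bigD1 u) //= E1 E2 eqxx xi0.
  rewrite subr0 subrr expr0n /= add0r; congr (_ + _).
  apply: eq_bigr => l /negbTE lu; by rewrite E1 E2 lu.
have := Hp p'; rewrite Hl Hs.
set a := p u 0; set w := (2 * eta)^-1.
have w0 : 0 < w by rewrite invr_gt0 mulr_gt0.
have h1 : 0 <= c * `|a| by rewrite mulr_ge0.
move=> H.
have : w * a ^+ 2 <= 0 by nra.
rewrite pmulr_rle0 // => ha.
have : a ^+ 2 == 0 by rewrite eq_le ha sqr_ge0.
by rewrite sqrf_eq0 => /eqP.
Qed.

Lemma opnorm_ge0 p q (A : 'M[R]_(p, q)) : 0 <= opnorm A.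
Proof.
rewrite /opnorm; set E := (X in sup X).
have E0 : E 0.
  exists 0; rewrite /= /l2norm /sqnorm.
    by rewrite big1 ?sqrtr0 // => i _; rewrite mxE expr0n.
  by rewrite mulmx0 big1 ?sqrtr0 // => i _; rewrite mxE expr0n.
case: (pselect (has_sup E)) => [hs|hns].
  exact: (sup_upper_bound hs E0).
by rewrite sup_out.
Qed.

End Aux.


Section Aux2.
Variable R : realType.

Lemma Psi0 : Psi 0 = 0 :> R.
Proof. by rewrite /Psi lexx. Qed.

Lemma Psi_bound (u : R) : `|Psi u| <= u ^+ 2.
Proof.
rewrite /Psi; case: ifP => _; first by rewrite normr0 sqr_ge0.
have h1 : expR (- (u ^+ 2)) <= 1 by rewrite expR_le1 oppr_le0 sqr_ge0.
have h2 := expR_ge1Dx (- (u ^+ 2)).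
rewrite ger0_norm; lra.
Qed.

Lemma Phi_bound (v : R) : `|Phi v| <= 4 * pi.
Proof.
rewrite /Phi; have h1 := atan_gtNpi2 v; have h2 := atan_ltpi2 v.
have p0 := @pi_gt0 R.
rewrite ger0_norm; lra.
Qed.

Lemma zcS n (w : 'I_n -> R) (l : 'I_n) : zc w l.+1 = w l.
Proof.
rewrite /zc /=; case: insubP => [oo _ Eo|]; last by rewrite ltn_ord.
by congr w; apply: val_inj.
Qed.

Lemma zc_eq n (w w' : 'I_n -> R) (k : nat) : (k != 1)%N ->
  (forall o : 'I_n, (o.+1 != k)%N -> w' o = w o) ->
  forall l, (l != k)%N -> zc w' l = zc w l.
Proof.
move=> k1 H l lk; rewrite /zc; case: insubP => [oo _ Eo|] //=.
apply: H; rewrite Eo; by case: l lk {Eo} => [|l] //= _; rewrite eq_sym.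
Qed.

Lemma varphi_diff n (w w' : 'I_n -> R) (k j : nat) : (2 <= k)%N ->
  (forall l, (l != k)%N -> zc w' l = zc w l) -> zc w k = 0 ->
  ((j != k)%N \/ zc w k.-1 = 0) ->
  `|varphi w' j - varphi w j| <= 8 * pi * (zc w' k) ^+ 2.
Proof.
move=> k2 He z0 Hj.
have p0 := @pi_gt0 R.
have B0 : 0 <= 8 * pi * (zc w' k) ^+ 2 by rewrite mulr_ge0 ?sqr_ge0 // mulr_ge0 // ltW.
have k1 : (k != 1)%N by case: k k2 {He z0 Hj B0} => [|[|]].
case: (eqVneq j k) => [jk|jk].
  rewrite jk in Hj *; have z1 : zc w k.-1 = 0 by case: Hj => [|//]; rewrite eqxx.
  have kk : (k.-1 != k)%N by apply/eqP; lia.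
  by rewrite /varphi (negbTE k1) (He k.-1) // z1 oppr0 Psi0 !mul0r !subr0 normr0.
case: (eqVneq j k.+1) => [jk1|jk1].
  rewrite jk1 /varphi /=.
  have -> : (k.+1 == 1)%N = false by rewrite eqSS (gtn_eqF (ltnW k2)).
  rewrite (He k.+1) ?z0 ?oppr0 ?Psi0 ?mul0r ?subrr ?subr0; last by apply/eqP; lia.
  set d := zc w' k; set a := zc w k.+1.
  apply: le_trans (ler_normB _ _) _; rewrite !normrM.
  have h1 := Psi_bound (- d); have h2 := Psi_bound d; rewrite sqrrN in h1.
  have h3 := Phi_bound (- a); have h4 := Phi_bound a.
  have g1 := normr_ge0 (Psi (- d)); have g2 := normr_ge0 (Psi d).
  have g3 := normr_ge0 (Phi (- a)); have g4 := normr_ge0 (Phi a).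
  have e1 : `|Psi (- d)| * `|Phi (- a)| <= d ^+ 2 * (4 * pi) by apply: ler_pM.
  have e2 : `|Psi d| * `|Phi a| <= d ^+ 2 * (4 * pi) by apply: ler_pM.
  lra.
have E1 : zc w' j = zc w j by apply: He.
have E2 : zc w' j.-1 = zc w j.-1.
  move/eqP: jk => jk; move/eqP: jk1 => jk1; apply: He; apply/eqP; lia.
have E3 : zc w' 1 = zc w 1 by apply: He; rewrite eq_sym.
by rewrite /varphi E1 E2 E3 subrr normr0.
Qed.

Lemma sum_diff_bound n (w w' : 'I_n -> R) (k dbar : nat) (F : nat -> nat) :
  (2 <= k)%N ->
  (forall l, (l != k)%N -> zc w' l = zc w l) -> zc w k = 0 ->
  (forall j, ((F j != k)%N \/ zc w k.-1 = 0)) ->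
  `|\sum_(1 <= j < (dbar./2).+1) varphi w' (F j) - \sum_(1 <= j < (dbar./2).+1) varphi w (F j)|
    <= dbar%:R * (8 * pi * (zc w' k) ^+ 2).
Proof.
move=> k2 He z0 HF.
have p0 := @pi_gt0 R.
have B0 : 0 <= 8 * pi * (zc w' k) ^+ 2 by rewrite mulr_ge0 ?sqr_ge0 // mulr_ge0 // ltW.
rewrite -sumrB; apply: le_trans (ler_norm_sum _ _ _) _.
have hs : \sum_(1 <= j < (dbar./2).+1) `|varphi w' (F j) - varphi w (F j)|
   <= \sum_(1 <= j < (dbar./2).+1) (8 * pi * (zc w' k) ^+ 2).
  by apply: ler_sum => j _; apply: varphi_diff.
apply: le_trans hs _.
rewrite sumr_const_nat subn1 /= -(mulr_natr (8 * pi * zc w' k ^+ 2) (dbar./2)) mulrC.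
apply: ler_wpM2r => //; rewrite ler_nat; lia.
Qed.

Lemma hfun_diff (m dbar ii k : nat) (w w' : 'I_dbar -> R) : (2 <= k)%N ->
  (forall l, (l != k)%N -> zc w' l = zc w l) -> zc w k = 0 ->
  ((ii <= m %/ 3)%N -> ~~ odd k -> zc w k.-1 = 0) ->
  (~~ (ii <= (2 * m) %/ 3)%N -> odd k -> zc w k.-1 = 0) ->
  `|hfun m dbar ii w' - hfun m dbar ii w| <= (1 + 3 * dbar%:R) * (8 * pi * (zc w' k) ^+ 2).
Proof.
move=> k2 He z0 H1 H3.
have p0 := @pi_gt0 R.
set B := 8 * pi * (zc w' k) ^+ 2.
have B0 : 0 <= B by rewrite mulr_ge0 ?sqr_ge0 // mulr_ge0 // ltW.
have d0 : 0 <= dbar%:R :> R by [].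
have dB : 0 <= dbar%:R * B :> R by rewrite mulr_ge0.
have T1 : `|varphi w' 1 - varphi w 1| <= B.
  by apply: varphi_diff => //; left; apply/eqP; lia.
have key : forall a c b d : R, `|a - c| <= B -> `|b - d| <= dbar%:R * B ->
    `|(a + 3 * b) - (c + 3 * d)| <= (1 + 3 * dbar%:R) * B.
  move=> a c b d h1 h2.
  have -> : (a + 3 * b) - (c + 3 * d) = (a - c) + 3 * (b - d) by ring.
  apply: le_trans (ler_normD _ _) _; rewrite normrM (ger0_norm (_ : 0 <= 3)) //.
  lra.
rewrite /hfun; case: ifP => Hi1.
  apply: key => //; apply: sum_diff_bound => // j.
  case: (boolP (odd k)) => ok; last by right; apply: H1.
  by left; apply/eqP => e; move: ok; rewrite -e oddM.
case: ifP => Hi2.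
  apply: le_trans T1 _; rewrite mulrDl mul1r; lra.
apply: key => //; apply: sum_diff_bound => // j.
case: (boolP (odd k)) => ok; first by right; apply: H3 => //; rewrite Hi2.
by left; apply/eqP => e; move: ok; rewrite -e oddD oddM.
Qed.

End Aux2.


Section Grad.
Variables (R : realType) (eps Lf : R) (m1 m2 dbar : nat).
Local Notation m := (mdim m1 m2).

Lemma blk_upd (x : 'cV[R]_(m * dbar)) (i : 'I_m) (ka : 'I_dbar) (h : R) i' k' :
  blk (h *: delta_mx (mxtens_index (i, ka)) 0 + x) i' k' =
  (if (i' == i) && (k' == ka) then h else 0) + blk x i' k'.
Proof.
rewrite /blk !mxE eqxx andbT (inj_eq (can_inj (@mxtens_indexK _ _))) xpair_eqE.
by case: ifP => _; rewrite ?mulr1 ?mulr0.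
Qed.

Lemma f0_diff (x : 'cV[R]_(m * dbar)) (i : 'I_m) (ka : 'I_dbar) (h : R) :
  f0 eps Lf m1 m2 dbar (h *: delta_mx (mxtens_index (i, ka)) 0 + x) - f0 eps Lf m1 m2 dbar x =
  (300 * pi * eps ^+ 2) / (m%:R * Lf) *
  (hfun m dbar i.+1 (fun k => (Num.sqrt m%:R * Lf) / (150 * pi * eps) *
        blk (h *: delta_mx (mxtens_index (i, ka)) 0 + x) i k)
   - hfun m dbar i.+1 (fun k => (Num.sqrt m%:R * Lf) / (150 * pi * eps) * blk x i k)).
Proof.
rewrite /f0 -sumrB (bigD1 i) //= big1 ?addr0; first by rewrite /ffun -mulrBr.
move=> i' /negbTE ni.
have -> : blk (h *: delta_mx (mxtens_index (i, ka)) 0 + x) i' = blk x i'.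
  by apply/funext => k'; rewrite blk_upd ni add0r.
by rewrite subrr.
Qed.

Lemma grad_f0_zero (x : 'cV[R]_(m * dbar)) (i : 'I_m) (ka : 'I_dbar) :
  (0 < ka)%N -> blk x i ka = 0 ->
  (((odd ka && (i < m1 * m2)) || (~~ odd ka && (2 * (m1 * m2) <= i)))%N ->
     forall ka' : 'I_dbar, ka'.+1 = ka -> blk x i ka' = 0) ->
  grad (f0 eps Lf m1 m2 dbar) x (mxtens_index (i, ka)) 0 = 0.
Proof.
move=> k0 xk Hp; rewrite /grad mxE /derive; apply: (@cvg_lim R^o); first exact: Rhausdorff.
set e := delta_mx (mxtens_index (i, ka)) 0.
set C := (300 * pi * eps ^+ 2) / (m%:R * Lf).
set al := (Num.sqrt m%:R * Lf) / (150 * pi * eps).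
set K := `|C| * ((1 + 3 * dbar%:R) * (8 * pi * al ^+ 2)).
have p0 := @pi_gt0 R.
have K0 : 0 <= K.
  apply: mulr_ge0 => //; apply: mulr_ge0; first by rewrite addr_ge0 // mulr_ge0.
  by rewrite mulr_ge0 ?sqr_ge0 // mulr_ge0 // ltW.
have Hb : forall h, `|f0 eps Lf m1 m2 dbar (h *: e + x) - f0 eps Lf m1 m2 dbar x| <= K * h ^+ 2.
  move=> h; rewrite f0_diff normrM.
  have -> : K * h ^+ 2 = `|C| * ((1 + 3 * dbar%:R) * (8 * pi * (al * h) ^+ 2)).
    by rewrite /K; ring.
  apply: ler_wpM2l => //.
  set w := fun k => al * blk x i k.
  set w' := fun k => al * blk (h *: e + x) i k.
  have Ew' : zc w' ka.+1 = al * h by rewrite zcS /w' blk_upd !eqxx xk addr0.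
  rewrite -Ew'.
  have Hka : (ka.-1 < dbar)%N by apply: leq_ltn_trans (leq_pred _) (ltn_ord ka).
  have Epr : zc w ka = 0 -> zc w ka = 0 by [].
  have Hzm : ((odd ka && (i < m1 * m2)) || (~~ odd ka && (2 * (m1 * m2) <= i)))%N -> zc w ka = 0.
    move=> /Hp H; rewrite -(prednK k0) -[ka.-1]/(nat_of_ord (Ordinal Hka)) zcS /w.
    by rewrite H ?mulr0 //= prednK.
  apply: hfun_diff.
  - by [].
  - apply: zc_eq; first by rewrite eqSS -lt0n.
    move=> o oka; rewrite /w' /w blk_upd.
    rewrite eqxx /=; case: eqP => [eo|_]; last by rewrite add0r.
    by move: oka; rewrite eo eqxx.
  - by rewrite zcS /w xk mulr0.
  - move=> Hi Ho; apply: Hzm; rewrite /= in Ho; rewrite negbK in Ho.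
    by rewrite Ho /=; apply/orP; left; move: Hi; rewrite /mdim; lia.
  - move=> Hi Ho; apply: Hzm; rewrite /= in Ho.
    by rewrite Ho /=; move: Hi; rewrite /mdim; lia.
apply/cvgrPdist_lt => eps0 eps00; near=> h.
have hn0 : h != 0 by near: h; exact: (@nbhs_dnbhs_neq R^o 0).
have hs : `|h| < eps0 / (K + 1).
  near: h; apply: dnbhs0_lt; rewrite divr_gt0 //; lra.
rewrite sub0r normrN /= /shift normrZ normfV.
have hpos : 0 < `|h| by rewrite normr_gt0.
rewrite ltr_pdivlMr in hs; last lra.
have hi : 0 <= `|h|^-1 by rewrite invr_ge0 normr_ge0.
have h1 := ler_wpM2l hi (Hb h).
have h2 : `|h|^-1 * (K * h ^+ 2) = K * `|h|.
  rewrite -(real_normK (num_real h)); field.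
  by rewrite normr_eq0.
rewrite h2 in h1; apply: le_lt_trans h1 _.
have h3 : 0 <= K * `|h| by rewrite mulr_ge0.
lra.
Unshelve. all: by end_near.
Qed.

End Grad.


Lemma aux0 (s s' a : nat) : (s' < s.+1)%N -> (s < a)%N -> (s' <= a)%N.
Proof. lia. Qed.
Lemma aux1 (s s' a b : nat) : (s' < s.+1)%N -> (s < a)%N -> (a <= b.+1)%N -> (s' <= b)%N.
Proof. lia. Qed.
Lemma aux2 (s s' a b1 b2 : nat) : (s' < s.+1)%N -> (s < a)%N -> (a <= b1.+1)%N ->
  (a <= b2.+1)%N -> (s' <= minn b1 b2)%N.
Proof. lia. Qed.
Lemma aux3 (s s' a1 a2 ac b1 b2 : nat) : (s' < s.+1)%N -> (s < minn a1 a2)%N ->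
  (ac = a1 \/ ac = a2) -> (ac <= b1.+1)%N -> (ac <= b2.+1)%N -> (s' <= minn b1 b2)%N.
Proof. lia. Qed.
Lemma aux4 (s s' a1 a2 ac : nat) : (s' < s.+1)%N -> (s < minn a1 a2)%N ->
  (ac = a1 \/ ac = a2) -> (s' <= ac)%N.
Proof. lia. Qed.

Theorem proposition4 (R : realType) (eps Lf beta : R) (m1 m2 dbar : nat) :
  0 < eps < 1 -> 0 < Lf ->
  (2 <= m1)%N -> (1 <= m2)%N -> ~~ odd (m1 * m2) ->
  odd dbar -> (5 <= dbar)%N ->
  (50 * pi + 1 + opnorm (Amat Lf m1 m2 dbar)) * Num.sqrt (mdim m1 m2)%:R * eps < beta ->
  forall (x : nat -> 'cV[R]_(mdim m1 m2 * dbar))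
         (y : nat -> 'cV[R]_(#|Mset m1 m2| * dbar)),
  x 0%N = 0 -> y 0%N = 0 ->
  class2 (f0 eps Lf m1 m2 dbar) (gbar beta Lf m1 m2 dbar)
         (Amat Lf m1 m2 dbar) 0 (Abar Lf m1 m2 dbar) 0 x y ->
  forall jbar : nat, (2 <= jbar <= dbar)%N ->
  forall t : nat, (3 * t <= 3 + mdim m1 m2 * (jbar - 2))%N ->
    (forall (i : 'I_(mdim m1 m2)) (k : 'I_dbar),
        (jbar <= k.+1)%N -> blk (x t) i k = 0) /\
    (forall (j : 'I_#|Mset m1 m2|) (k : 'I_dbar),
        (jbar <= k.+1)%N -> blk (y t) j k = 0).
Proof.
move=> /andP[eps0 eps1] Lf0 m1_2 m2_1 _ _ _ Hbeta x y x0 y0 Hcl jbar /andP[j2 jd] t Ht.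
have mq : mdim m1 m2 = (3 * (m1 * m2))%N by rewrite /mdim mulnA.
have beta0 : 0 <= beta / ((mdim m1 m2)%:R * Lf).
  apply: divr_ge0; last by rewrite mulr_ge0 // ltW.
  apply: le_trans (ltW Hbeta).
  have := @opnorm_ge0 R _ _ (Amat Lf m1 m2 dbar); have := @pi_gt0 R => hp ho.
  apply: mulr_ge0; last exact: ltW.
  apply: mulr_ge0; last exact: sqrtr_ge0.
  lra.
pose q := (m1 * m2)%N.
pose c (ka : nat) := (1 + ka.-1 * (q + 2))%N.
pose th (ka i : nat) : nat :=
  if ka == 0%N then 0%N else if odd ka then (c ka + (i.+1 - q))%N else (c ka + (2 * q - i))%N.
pose thy (ka : nat) (r : 'I_#|Mset m1 m2|) :=
  minn (th ka (enum_val r)) (th ka (enum_val r).+1).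
have thL : forall ka i i', (i' <= i.+1)%N -> (i <= i'.+1)%N -> (th ka i <= (th ka i').+1)%N.
  move=> ka i i' h1 h2; rewrite /th; case: (ka == 0%N) => //; case: (odd ka); lia.
have thN : forall ka (i c b : nat), (i = b \/ i = b.+1) -> (c = b \/ c = b.+1) ->
    (th ka i <= (th ka c).+1)%N.
  move=> ka i c0 b h1 h2; apply: thL; case: h1 => ->; case: h2 => ->; lia.
have thP : forall ka i, (0 < ka)%N ->
    ((odd ka && (i < q)) || (~~ odd ka && (2 * q <= i)))%N ->
    (th ka i <= (th ka.-1 i).+1)%N.
  move=> [|[|k]] // i _; rewrite /th /=.
    by move=> /orP; rewrite /c /=; lia.
  rewrite /c /= mulSn; case: (odd k) => /=; lia.
have thF : forall ka i, (jbar <= ka.+1)%N -> (t <= th ka i)%N.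
  move=> ka i hk.
  have a1 : ((jbar - 2) * (q + 2) <= ka.-1 * (q + 2))%N.
    by rewrite leq_mul2r; apply/orP; right; lia.
  have a2 : (q * (jbar - 2) <= (jbar - 2) * (q + 2))%N.
    by rewrite mulnC leq_mul2l leq_addr orbT.
  have a3 : (3 * t <= 3 + 3 * (q * (jbar - 2)))%N by move: Ht; rewrite mq -mulnA.
  rewrite /th; have -> : (ka == 0%N) = false by apply/eqP; lia.
  case: (odd ka); rewrite /c; lia.
have main : forall s,
   (forall (i : 'I_(mdim m1 m2)) (ka : 'I_dbar), (s <= th ka i)%N ->
       x s (mxtens_index (i, ka)) 0 = 0) /\
   (forall (r : 'I_#|Mset m1 m2|) (ka : 'I_dbar), (s <= thy ka r)%N ->
       y s (mxtens_index (r, ka)) 0 = 0).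
  elim/ltn_ind => s IH.
  case: s IH => [|s] IH.
    by split => *; rewrite ?x0 ?y0 mxE.
  have IHx : forall s', (s' < s.+1)%N -> forall (i : 'I_(mdim m1 m2)) (ka : 'I_dbar),
      (s' <= th ka i)%N -> x s' (mxtens_index (i, ka)) 0 = 0.
    by move=> s' hs'; have [] := IH s' hs'.
  have IHy : forall s', (s' < s.+1)%N -> forall (r : 'I_#|Mset m1 m2|) (ka : 'I_dbar),
      (s' <= thy ka r)%N -> y s' (mxtens_index (r, ka)) 0 = 0.
    by move=> s' hs'; have [] := IH s' hs'.
  have [Hx [eta [eta0 [xi [Hxi [p [Hp Hy]]]]]]] := Hcl s.+1 isT.
  split.
    move=> i ka hth.
    have ka0 : (0 < ka)%N.
      by move: hth; rewrite /th; case: (eqVneq (nat_of_ord ka) 0%N) => [->|]; rewrite ?lt0n.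
    apply: span_entry0 Hx; apply: flatten_entry0 => s' hs' w.
    rewrite !inE => /orP[/eqP->|/orP[/eqP->|/orP[/eqP->|/orP[/eqP->|/orP[/eqP->|/orP[/eqP->|/eqP->]]]]]].
    - by apply: IHx => //; exact: aux0 hs' hth.
    - apply: grad_f0_zero => //; first by apply: IHx => //; exact: aux0 hs' hth.
      move=> hp ka' eka; apply: IHx => //.
      have h := thP _ _ ka0 hp; move: hth h; rewrite -eka /= => hth h.
      exact: aux1 hs' hth h.
    - by rewrite mulmx0 mxE.
    - rewrite -mulmxA; apply: tens1_mulT0 => r hr; apply: tens1_mul0 => c0 hc.
      apply: IHx => //; apply: aux1 hs' hth _.
      exact: thN ka i c0 (enum_val r) (@Jrows_nz R _ _ _ _ hr) (@Jrows_nz R _ _ _ _ hc).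
    - by rewrite mulmx0 mxE.
    - rewrite -mulmxA; apply: tens1_mulT0 => r hr; apply: tens1_mul0 => c0 hc.
      apply: IHx => //; apply: aux1 hs' hth _.
      exact: thN ka i c0 (enum_val r) (@Jrows_nz R _ _ _ _ hr) (@Jrows_nz R _ _ _ _ hc).
    - apply: tens1_mulT0 => r hr; apply: IHy => //.
      apply: aux2 hs' hth _ _.
        exact: thN ka i (enum_val r) (enum_val r) (@Jrows_nz R _ _ _ _ hr) (or_introl erefl).
      exact: thN ka i (enum_val r).+1 (enum_val r) (@Jrows_nz R _ _ _ _ hr) (or_intror erefl).
  move=> r ka hth.
  have hxi : xi (mxtens_index (r, ka)) 0 = 0.
    apply: span_entry0 Hxi; apply: flatten_entry0 => s' hs' w.
    rewrite !inE => /orP[/eqP->|/orP[/eqP->|/orP[/eqP->|/eqP->]]].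
    - by rewrite mxE.
    - by apply: IHy => //; exact: aux0 hs' hth.
    - rewrite -mulmxA; apply: tens1_mul0 => c0 hc; apply: tens1_mulT0 => r' hr'.
      apply: IHy => //.
      have hc' : th ka c0 = th ka (enum_val r) \/ th ka c0 = th ka (enum_val r).+1.
        by case: (@Jrows_nz R _ _ _ _ hc) => ->; [left|right].
      apply: aux3 hs' hth hc' _ _.
        exact: thN ka c0 (enum_val r') (enum_val r') (@Jrows_nz R _ _ _ _ hr') (or_introl erefl).
      exact: thN ka c0 (enum_val r').+1 (enum_val r') (@Jrows_nz R _ _ _ _ hr') (or_intror erefl).
    - apply: tens1_mul0 => c0 hc; apply: IHx => //.
      have hc' : th ka c0 = th ka (enum_val r) \/ th ka c0 = th ka (enum_val r).+1.
        by case: (@Jrows_nz R _ _ _ _ hc) => ->; [left|right].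
      exact: aux4 hs' hth hc'.
  apply: span_entry0 Hy => w; rewrite !inE => /orP[/eqP->|/eqP->] //.
  exact: (@prox_zero R _ _ _ _ _ _ beta0 eta0 Hp hxi).
split => i k hk.
  by apply: (main t).1; apply: thF.
apply: (main t).2; rewrite /thy leq_min; apply/andP; split; exact: thF.
Qed.
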